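(* Let $q>2$ be a power of $2$ and let $U$ be an intersecting family of polynomials over $\mathbb{F}_q$ of degree at most $2$, with $f$, $B_t$, $\mathrm{Dom}$ as in the context. Let $A,B\colon\mathrm{Dom}\to\mathbb{F}_q$ be functions such that $f(b,b+t)=A(t)b+B(t)$ for every $t\in\mathrm{Dom}$ and $b\in B_t$, and $\mathrm{Tr}_{q/2}(A(t))=0$ for every $t\in\mathrm{Dom}$. Then there exist $\alpha,\beta\in\mathbb{F}_q$ such that $A(t)=\alpha^{q/2}+\alpha$ and $B(t)=\alpha t+\beta$ for each $t\in\mathrm{Dom}$.
   Context: $q=2^n$ and $\mathrm{Tr}_{q/2}(x)=x+x^2+\cdots+x^{2^{n-1}}$. A set of polynomials over $\mathbb{F}_q$ is intersecting if the graphs $\{(x,g(x)):x\in\mathbb{F}_q\}$ of any two members share a point. For such $U$ of degree at most $2$, let $D=\{(b,c)\in\mathbb{F}_q^2 : a+bx+cx^2\in U\text{ for some } a\}$; for $(b,c)\in D$ this $a$ is unique and $f(b,c):=a$. For $t\in\mathbb{F}_q$ let $B_t=\{b\in\mathbb{F}_q : (b,b+t)\in D\}$ and $\mathrm{Dom}=\{t\in\mathbb{F}_q : |B_t|\ge q-\sqrt{q}/2\}$. *)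

(* Defs.v *)
From HB Require Import structures.
From mathcomp Require Import all_boot all_order all_algebra all_field.
Set Implicit Arguments. Unset Strict Implicit. Unset Printing Implicit Defensive.
Import Order.TTheory GRing.Theory Num.Theory.
Local Open Scope ring_scope.

Section Defs.
Variable F : finFieldType.

Definition quad (a b c : F) : {poly F} := a%:P + b *: 'X + c *: 'X^2.

Definition intersecting (U : {pred {poly F}}) : Prop :=
  forall g h, g \in U -> h \in U -> exists x, g.[x] = h.[x].

Definition deg_le2 (U : {pred {poly F}}) : Prop :=
  forall g, g \in U -> (size g <= 3)%N.

(* f(b,c) := the (unique, for intersecting U) a with a+bx+cx^2 in U;
   0 if (b,c) is not in D (never used there) *)
Definition fU (U : {pred {poly F}}) (b c : F) : F :=
  odflt 0 [pick a | quad a b c \in U].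

Definition Bset (U : {pred {poly F}}) (t : F) : {set F} :=
  [set b | [exists a, quad a b (b + t) \in U]].

Definition inDom (U : {pred {poly F}}) (t : F) : bool :=
  ((#|F|%:R : algC) - sqrtC (#|F|%:R) / 2 <= #|Bset U t|%:R).

Definition trace2 (n : nat) (x : F) : F := \sum_(i < n) x ^+ (2 ^ i).
End Defs.

(* Main.v *)
Require Import Defs.
From HB Require Import structures.
From mathcomp Require Import all_boot all_order all_algebra all_field.
From mathcomp Require Import ring lra zify.
Import Order.TTheory GRing.Theory Num.Theory.
Local Open Scope ring_scope.

Section Aux.
Variable F : finFieldType.
Variable n : nat.
Hypothesis hq : #|F| = (2 ^ n)%N.
Hypothesis hn : (1 <= n)%N.

Lemma ch2 : (2 \in [char F])%R.
Proof. exact: (card_finPcharP hq). Qed.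

Lemma oppF (x : F) : - x = x.
Proof. exact: (oppr_pchar2 ch2). Qed.

Lemma addFF (x : F) : x + x = 0.
Proof. exact: (addrr_pchar2 ch2). Qed.

Lemma frobD k (x y : F) : (x + y) ^+ (2 ^ k) = x ^+ (2 ^ k) + y ^+ (2 ^ k).
Proof.
apply: exprDn_pchar; rewrite pnatX; apply/orP; left.
by rewrite pnatE //; exact: ch2.
Qed.

Lemma tr_add (x y : F) : trace2 n (x + y) = trace2 n x + trace2 n y.
Proof. by rewrite /trace2 -big_split /=; apply: eq_bigr => i _; exact: frobD. Qed.

Lemma tr_sq (x : F) : trace2 n (x ^+ 2) = trace2 n x.
Proof.
rewrite /trace2; case: n hq hn => [//|m] hq' _.
under eq_bigr do rewrite -exprM -expnS.
rewrite big_ord_recr big_ord_recl /= -hq' expf_card addrC; congr (_ + _).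
Qed.

Lemma sqr_sum (x : F) : trace2 n x ^+ 2 = trace2 n (x ^+ 2).
Proof.
rewrite /trace2 (big_morph (fun y : F => y ^+ 2) (id1 := 0) (op1 := +%R)).
- by apply: eq_bigr => i _; rewrite -!exprM mulnC.
- by move=> a b; exact: (frobD 1).
- by rewrite expr0n.
Qed.

Lemma tr_01 (x : F) : trace2 n x = 0 \/ trace2 n x = 1.
Proof.
have h : trace2 n x * (trace2 n x - 1) = 0.
  by rewrite mulrBr mulr1 -expr2 sqr_sum tr_sq subrr.
move/eqP: h; rewrite mulf_eq0 subr_eq0 => /orP[/eqP|/eqP]; tauto.
Qed.

Lemma tr_y2y (y : F) : trace2 n (y ^+ 2 + y) = 0.
Proof. by rewrite tr_add tr_sq addFF. Qed.

Lemma tr_opp (x : F) : trace2 n (- x) = trace2 n x.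
Proof. by rewrite oppF. Qed.

Lemma tr_ker_card : (#|[set y : F | trace2 n y == 0%R]| <= 2 ^ n.-1)%N.
Proof.
pose p : {poly F} := \sum_(i < n) 'X^(2 ^ i).
have hp : forall y, p.[y] = trace2 n y.
  by move=> y; rewrite /p horner_sum; apply: eq_bigr => i _; rewrite hornerXn.
have sp : size p = (2 ^ n.-1).+1.
  rewrite /p; case: n hn => [//|m] _ /=.
  rewrite big_ord_recr /= addrC size_polyDl size_polyXn //.
  apply: (leq_ltn_trans (size_sum _ _ _)).
  case: m => [|m]; first by rewrite big_ord0.
  rewrite ltnS; apply/bigmax_leqP => i _; rewrite size_polyXn.
  by rewrite ltn_exp2l.
have pn0 : p != 0 by rewrite -size_poly_gt0 sp.
have := max_poly_roots pn0 (rs := enum [set y : F | trace2 n y == 0%R]).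
rewrite enum_uniq sp cardE ltnS; apply.
apply/allP => y; rewrite mem_enum inE => /eqP hy.
by rewrite /root hp hy.
by [].

Qed.

End Aux.

Section Main.
Variable F : finFieldType.
Variable n : nat.
Variable U : {pred {poly F}}.
Variables A B : F -> F.
Hypothesis hq : #|F| = (2 ^ n)%N.
Hypothesis hq2 : (2 < #|F|)%N.
Hypothesis hint : intersecting U.
Hypothesis hf : forall t, inDom U t -> forall b, b \in Bset U t ->
     fU U b (b + t) = A t * b + B t.
Hypothesis htr : forall t, inDom U t -> trace2 n (A t) = 0.

Lemma n2 : (2 <= n)%N.
Proof. move: hq2; rewrite hq; case: n => [|[|m]] //. Qed.

Lemma n1 : (1 <= n)%N.
Proof. by have := n2; case: n. Qed.

Lemma qh : #|F| = (2 * 2 ^ n.-1)%N.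
Proof. by rewrite hq -expnS prednK // n1. Qed.

Lemma dom_card {t} : inDom U t -> (4 * #|~: Bset U t| ^ 2 <= #|F|)%N.
Proof.
rewrite /inDom => hD.
set k := #|~: Bset U t|; set b := #|Bset U t|.
have hqb : #|F| = (b + k)%N by rewrite cardsC.
move: hD; rewrite hqb natrD lerBlDr lerD2l => hk.
have s0 : (0 : algC) <= sqrtC (b + k)%:R by rewrite sqrtC_ge0.
have hk2 : (k%:R : algC) * 2 <= sqrtC (b + k)%:R.
  by move: hk; rewrite ler_pdivlMr ?natrD.
rewrite -natrM in hk2.
have := ler_pM (ler0n _ _) (ler0n _ _) hk2 hk2.
rewrite -[sqrtC _ * _]expr2 sqrtCK -!natrM ler_nat => h.
nia.
Qed.

Lemma mem_quad {t b} : inDom U t -> b \in Bset U t ->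
  quad (A t * b + B t) b (b + t) \in U.
Proof.
move=> hD hb; rewrite -hf //; move: hb; rewrite /fU inE.
case: pickP => [a /= ha|hn] //= /existsP[a ha].
by rewrite hn in ha.
Qed.

Lemma quadE a b c (x : F) : (quad a b c).[x] = a + b * x + c * x ^+ 2.
Proof. by rewrite /quad !hornerE. Qed.

Lemma key {a1 b1 c1 a2 b2 c2} : quad a1 b1 c1 \in U -> quad a2 b2 c2 \in U ->
  b1 != b2 -> trace2 n ((a1 - a2) * (c1 - c2) / (b1 - b2) ^+ 2) = 0.
Proof.
move=> h1 h2 hb; have [x] := hint _ _ h1 h2; rewrite !quadE => hx.
have hC : b1 - b2 != 0 by rewrite subr_eq0.
have e0 : a1 - a2 + ((b1 - b2) * x + (c1 - c2) * x ^+ 2) = 0.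
  by rewrite -[RHS](subrr (a1 + b1 * x + c1 * x ^+ 2)) {2}hx; ring.
have e : a1 - a2 = - ((b1 - b2) * x + (c1 - c2) * x ^+ 2).
  by apply/eqP; rewrite -addr_eq0 e0.
pose y := (c1 - c2) * x / (b1 - b2).
have hy : (a1 - a2) * (c1 - c2) / (b1 - b2) ^+ 2 = - (y ^+ 2 + y).
  by rewrite e /y; field.
by rewrite hy tr_opp ?tr_y2y //; exact: n1.
Qed.

Definition sq (z : F) := z ^+ (#|F| %/ 2).

Lemma sqE : (#|F| %/ 2 = 2 ^ n.-1)%N.
Proof. by rewrite qh mulKn. Qed.

Lemma sq_sqr z : sq z ^+ 2 = z.
Proof. by rewrite /sq -exprM sqE mulnC -expnS prednK ?n1 // -hq expf_card. Qed.

Lemma sq_sqr' z : sq (z ^+ 2) = z.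
Proof. by rewrite /sq -exprM sqE -expnS prednK ?n1 // -hq expf_card. Qed.

Lemma sqD x y : sq (x + y) = sq x + sq y.
Proof. by rewrite /sq sqE (frobD _ _ hq). Qed.

Lemma sqM x y : sq (x * y) = sq x * sq y.
Proof. by rewrite /sq exprMn. Qed.

Lemma sol_cases m m' : sq m + m = sq m' + m' -> m' = m \/ m' = m + 1.
Proof.
move=> h; pose z := m' + m.
have hz : sq z + z = 0.
  rewrite /z sqD.
  have -> : sq m' + sq m + (m' + m) = (sq m' + m') + (sq m + m) by ring.
  by rewrite h (addFF _ _ hq).
have hz2 : sq z = z.
  by apply/eqP; rewrite -[X in _ == X](oppF _ _ hq z) -addr_eq0 hz.
have hzz : z * (z - 1) = 0.
  by rewrite mulrBr mulr1 -expr2 -{1}hz2 sq_sqr subrr.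
move/eqP: hzz; rewrite mulf_eq0 subr_eq0 => /orP[/eqP h0|/eqP h1].
- left; apply/eqP; rewrite -(oppF _ _ hq m) -addr_eq0; apply/eqP; exact: h0.
- right; apply/eqP; rewrite -subr_eq0 (GRing.subr_pchar2 (ch2 _ _ hq)) addrA.
  by rewrite -/z h1 (addFF _ _ hq).
Qed.

Lemma card2_dom {t} : inDom U t -> (1 < #|Bset U t|)%N.
Proof.
move=> hD; have := dom_card hD.
have : (#|Bset U t| + #|~: Bset U t| = #|F|)%N := cardsC _.
have := hq2; nia.
Qed.

Lemma gamma t : inDom U t -> exists al, A t = sq al + al.
Proof.
move=> hD; have /card_gt1P[b1 [b2 [h1 h2 hb]]] := card2_dom hD.
have [x] := hint _ _ (mem_quad hD h1) (mem_quad hD h2); rewrite !quadE => hx.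
have e : (b1 - b2) * (A t + x + x ^+ 2) = 0.
  by rewrite -[RHS](subrr (A t * b1 + B t + b1 * x + (b1 + t) * x ^+ 2)) {2}hx; ring.
move/eqP: e; rewrite mulf_eq0 subr_eq0 (negbTE hb) /= => /eqP e.
exists (x ^+ 2); rewrite sq_sqr'.
apply/eqP; rewrite -(oppF _ _ hq (A t)) eq_sym -addr_eq0; apply/eqP; rewrite -e; ring.
Qed.

Lemma tr0 : trace2 n (0 : F) = 0.
Proof. by rewrite /trace2 big1 // => i _; rewrite expr0n expn_eq0. Qed.

Lemma union_card (d t s : F) :
  (#|(~: Bset U t) :|: ((fun b : F => (b - d)%R) @^-1: (~: Bset U s))|
     <= #|~: Bset U t| + #|~: Bset U s|)%N.
Proof.
rewrite cardsU card_preimset ?leq_subr // => x y; exact: addIr.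
Qed.

Lemma tr_inj_card (g : F -> F) (S : {set F}) : injective g ->
  (forall x, x \in S -> trace2 n (g x) = 0) -> (#|S| <= 2 ^ n.-1)%N.
Proof.
move=> gi hS; apply: leq_trans (tr_ker_card F n n1).
rewrite -[X in (_ <= X)%N](card_preimset _ gi); apply: subset_leq_card; apply/subsetP => x hx.
by rewrite !inE hS.
Qed.

Lemma nonempty_G t s d : inDom U t -> inDom U s ->
  exists b, b \in Bset U t /\ b - d \in Bset U s.
Proof.
move=> ht hs.
case: (pickP [pred b | (b \in Bset U t) && (b - d \in Bset U s)]) => [b /andP[h1 h2]|none].
  by exists b.
exfalso.
have sub : [set: F] \subset (~: Bset U t) :|: ((fun b => b - d) @^-1: (~: Bset U s)).
  apply/subsetP => b _; have := none b; rewrite /= => /negbT; rewrite negb_and !inE.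
  done.
have h5 := leq_trans (subset_leq_card sub) (union_card d t s).
have h4 : (#|[set: F]| = #|F|)%N := cardsT _.
rewrite h4 in h5.
have h2 := dom_card ht; have h3 := dom_card hs; have h1 := hq2.
have h6 := leq_mul h5 h5; nia.
Qed.

Lemma w_zero t s : inDom U t -> inDom U s -> A t = A s -> t != s ->
  A t * (t - s) + (B t - B s) + sq ((B t - B s) * (t - s)) = 0.
Proof.
move=> ht hs hAc hts.
set u := t - s; set BB := B t - B s; set w := _ + _ + _.
apply/eqP; apply/negP => /negP hw.
have hall : forall d, d \in [set: F] -> trace2 n (w * d^-1) = 0.
  move=> d _; have [->|hd] := eqVneq d 0; first by rewrite invr0 mulr0 tr0.
  have [b [h1 h2]] := nonempty_G t s d ht hs.
  have hb : b != b - d.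
    by apply: contra hd => /eqP e; rewrite -(subrr b) {2}e; apply/eqP; ring.
  have := key (mem_quad ht h1) (mem_quad hs h2) hb.
  rewrite -hAc.
  have -> : (A t * b + B t - (A t * (b - d) + B s)) * (b + t - (b - d + s)) / (b - (b - d)) ^+ 2
     = A t + (A t * u + BB) / d + (sq (BB * u) / d) ^+ 2.
    by rewrite expr_div_n sq_sqr /u /BB; field.
  rewrite (tr_add _ _ hq) (tr_sq _ _ hq n1) -(tr_add _ _ hq).
  by rewrite -addrA (tr_add _ _ hq) (htr _ ht) add0r -mulrDl.
have gi : injective (fun d => w * d^-1).
  by move=> x y /(mulfI hw); exact: invr_inj.
have h1 := tr_inj_card _ _ gi hall.
have h2 : (#|[set: F]| = #|F|)%N := cardsT _.
rewrite h2 qh in h1; move: h1; rewrite -{2}(mul1n (2 ^ n.-1)%N) leq_mul2r expn_eq0 /=.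
by [].
Qed.

Lemma slope t s : inDom U t -> inDom U s -> A t = A s -> t != s ->
  A t = sq ((B t - B s) / (t - s)) + (B t - B s) / (t - s).
Proof.
move=> ht hs hAc hts; have := w_zero _ _ ht hs hAc hts.
have hu : t - s != 0 by rewrite subr_eq0.
set m := (B t - B s) / (t - s).
have -> : B t - B s = m * (t - s) by rewrite /m; field.
rewrite -mulrA -expr2 sqM sq_sqr' => h.
have : (t - s) * (A t + (m + sq m)) = 0 by rewrite -[RHS]h; ring.
move/eqP; rewrite mulf_eq0 (negbTE hu) /= => /eqP h2.
by rewrite -[LHS]subr0 -h2 opprD addrA subrr add0r (oppF _ _ hq) addrC.
Qed.

Lemma tr2E (z : F) : trace2 2 z = z + z ^+ 2.
Proof. by rewrite /trace2 !big_ord_recr big_ord0 /= add0r expr1. Qed.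

Lemma tr2_zero (z : F) : n = 2%N -> trace2 n z = 0 -> z = 0 \/ z = 1.
Proof.
move=> -> ; rewrite tr2E => h.
have : z * (1 + z) = 0 by rewrite -[RHS]h; ring.
move/eqP; rewrite mulf_eq0 => /orP[/eqP ->|/eqP h1]; first by left.
right; apply/eqP; rewrite -[X in _ == X](oppF _ _ hq) -addr_eq0 addrC h1 //.
Qed.

Lemma two0 : (2%:R : F) = 0.
Proof. exact: pcharf0 (ch2 _ _ hq). Qed.

Lemma A_const t s : inDom U t -> inDom U s -> A t = A s.
Proof.
move=> ht hs; apply/eqP/negPn/negP => hA.
have hts : t != s by apply: contra hA => /eqP ->.
have hu : t - s != 0 by rewrite subr_eq0.
have hDl : A t - A s != 0 by rewrite subr_eq0.
set u := t - s in hu; set Dl := A t - A s in hDl.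
have claim : forall d, d != 0 -> d + u != 0 ->
  [/\ n = 2%N, (#|~: Bset U t| <= 1)%N, (#|~: Bset U s| <= 1)%N &
    exists p r, [/\ p \in ~: Bset U t, r \in ~: Bset U s &
       Dl * (d + u) / d ^+ 2 * (p - r - d) = 1]].
  move=> d hd hdu.
  pose c := Dl * (d + u) / d ^+ 2.
  pose e := (A s * d + (B t - B s)) * (d + u) / d ^+ 2.
  have hc : c != 0 by rewrite /c !mulf_neq0 // invr_eq0 expf_neq0.
  pose Z := [set b | trace2 n (c * b + e) == 0].
  have hZ : forall b, b \in Bset U t -> b - d \in Bset U s -> b \in Z.
    move=> b h1 h2.
    have hb : b != b - d.
      by apply: contra hd => /eqP e0; rewrite -(subrr b) {2}e0; apply/eqP; ring.
    have := key (mem_quad ht h1) (mem_quad hs h2) hb.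
    have -> : (A t * b + B t - (A s * (b - d) + B s)) * (b + t - (b - d + s))
        / (b - (b - d)) ^+ 2 = c * b + e by rewrite /c /e /Dl /u; field.
    by rewrite inE => ->.
  have gi : injective (fun b => c * b + e) by move=> x y /addIr /(mulfI hc).
  have cZ : (#|Z| <= 2 ^ n.-1)%N.
    by apply: (tr_inj_card _ _ gi) => x; rewrite inE => /eqP.
  have subV : ~: Z \subset (~: Bset U t) :|: ((fun b : F => b - d) @^-1: (~: Bset U s)).
    apply/subsetP => b hb; rewrite in_setU; apply/negPn/negP => /norP[].
    rewrite in_setC negbK => h1; rewrite /preimset in_set in_setC negbK => h2.
    by move: hb; rewrite in_setC (hZ _ h1 h2).
  have cZC : (#|Z| + #|~: Z| = #|F|)%N := cardsC _.
  have cU := leq_trans (subset_leq_card subV) (union_card d t s).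
  have k1 := dom_card ht; have k2 := dom_card hs.
  have hh2 : (2 <= 2 ^ n.-1)%N.
    by rewrite -{1}(expn1 2) leq_exp2l // -ltnS prednK ?n1 // n2.
  rewrite qh in k1 k2 cZC.
  have hh : (2 ^ n.-1 = 2)%N.
    move: cZ cZC cU k1 k2 hh2; set h := (2 ^ n.-1)%N; set a := #|~: Bset U t|;
    set b := #|~: Bset U s|; set z := #|Z|; set zc := #|~: Z| => ? ? ? ? ? ?.
    have : (h <= a + b)%N by lia.
    move=> hab; have hab2 := leq_mul hab hab; nia.
  have hn2 : n = 2%N.
    have : (n.-1 == 1)%N by rewrite -(eqn_exp2l _ _ (ltnSn 1)) hh.
    by move/eqP => h1; rewrite -(prednK n1) h1.
  rewrite hh in k1 k2 cZ cZC.
  have ka : (#|~: Bset U t| <= 1)%N by nia.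
  have kb : (#|~: Bset U s| <= 1)%N by nia.
  split => //.
  have : (1 < #|~: Z|)%N by lia.
  move/card_gt1P => [v1 [v2 [hv1 hv2 hv12]]].
  have fin : forall p r, p \in ~: Bset U t -> r \in ~: Bset U s ->
      p \in ~: Z -> r + d \in ~: Z -> p != r + d ->
      exists p r, [/\ p \in ~: Bset U t, r \in ~: Bset U s & c * (p - r - d) = 1].
    move=> p r hp hr hpZ hrZ hpr; exists p, r; split => //.
    have t1 : forall x, x \in ~: Z -> trace2 n (c * x + e) = 1.
      move=> x; rewrite !inE => hx.
      by case: (tr_01 F n hq n1 (c * x + e)) => // h0; rewrite h0 eqxx in hx.
    have hx0 : trace2 n (c * (p - r - d)) = 0.
      have -> : c * (p - r - d) = (c * p + e) - (c * (r + d) + e) by ring.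
      by rewrite (tr_add _ _ hq) (tr_opp _ _ hq) !t1 // (addFF _ _ hq).
    case: (tr2_zero _ hn2 hx0) => // /eqP; rewrite mulf_eq0 (negbTE hc) /= subr_eq0.
    by move=> /eqP e0; move: hpr; rewrite -e0 addrC subrK eqxx.
  have spl : forall v, v \in ~: Z -> v \in ~: Bset U t \/ v - d \in ~: Bset U s.
    move=> v hv; have := subsetP subV v hv; rewrite in_setU => /orP[h|h]; first by left.
    by right; rewrite /preimset in_set in h.
  move/card_le1P: ka => ka'; move/card_le1P: kb => kb'.
  case: (spl v1 hv1) => [a1|a1]; case: (spl v2 hv2) => [a2|a2].
  - by have := ka' v1 a1 v2; rewrite a2 => /esym/eqP e0; rewrite e0 eqxx in hv12.
  - by apply: (fin v1 (v2 - d)); rewrite ?subrK.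
  - by apply: (fin v2 (v1 - d)); rewrite ?subrK // eq_sym.
  - have := kb' (v1 - d) a1 (v2 - d); rewrite a2 => /esym/eqP /addIr e0.
    by rewrite e0 eqxx in hv12.
have hS : (1 < #|[set d : F | (d != 0%R) && ((d + u)%R != 0%R)]|)%N.
  set S := [set d : F | _].
  have sub : ~: S \subset [set 0; - u].
    apply/subsetP => d; rewrite !inE negb_and !negbK => /orP[->//|/eqP h].
    by rewrite -(addrK u d) h sub0r eqxx orbT.
  have c1 := subset_leq_card sub; have c2 : (#|S| + #|~: S| = #|F|)%N := cardsC _.
  have c3 : (#|~: S| <= 2)%N by apply: (leq_trans c1); rewrite cards2; case: (_ != _).
  have := n2; have := hq2; rewrite hq => ? ?.
  have c4 : (4 <= 2 ^ n)%N by rewrite -[4%N]/(2 ^ 2)%N leq_exp2l.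
  rewrite hq in c2; lia.
move/card_gt1P: hS => [d1 [d2 [hd1 hd2 hd12]]].
rewrite !inE in hd1 hd2; case/andP: hd1 => hd1 hdu1; case/andP: hd2 => hd2 hdu2.
have [hn2 ka kb [p1 [r1 [hp1 hr1 e1]]]] := claim d1 hd1 hdu1.
have [_ _ _ [p2 [r2 [hp2 hr2 e2]]]] := claim d2 hd2 hdu2.
move/card_le1P: ka => ka'; move/card_le1P: kb => kb'.
have := ka' p1 hp1 p2; rewrite hp2 => /esym/eqP ep.
have := kb' r1 hr1 r2; rewrite hr2 => /esym/eqP er.
rewrite ep er in e2.
have hD1 : Dl = 1.
  have hAt := tr2_zero _ hn2 (htr _ ht); have hAs := tr2_zero _ hn2 (htr _ hs).
  rewrite /Dl; case: hAt => ea; case: hAs => eb; rewrite ea eb in hA *.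
  - by rewrite eqxx in hA.
  - by rewrite sub0r (oppF _ _ hq).
  - by rewrite subr0.
  - by rewrite eqxx in hA.
have E : forall d, d != 0 -> Dl * (d + u) / d ^+ 2 * (p1 - r1 - d) = 1 ->
    d * ((p1 - r1) - u) + u * (p1 - r1) = 0.
  move=> d hd; rewrite hD1 mul1r => h.
  have h' : (d + u) * (p1 - r1 - d) = d ^+ 2.
    by rewrite -[RHS]mul1r -h; field.
  have -> : d * ((p1 - r1) - u) + u * (p1 - r1)
     = ((d + u) * (p1 - r1 - d) - d ^+ 2) + 2%:R * d ^+ 2 by ring.
  by rewrite h' subrr two0 mul0r addr0.
have E1 := E _ hd1 e1; have E2 := E _ hd2 e2.
have : (d1 - d2) * (p1 - r1 - u) =
   (d1 * (p1 - r1 - u) + u * (p1 - r1)) - (d2 * (p1 - r1 - u) + u * (p1 - r1)) by ring.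
rewrite E1 E2 subrr => /eqP; rewrite mulf_eq0 subr_eq0 (negbTE hd12) /= subr_eq0 => /eqP hm.
move: E1; rewrite hm subrr mulr0 add0r => /eqP; rewrite mulf_eq0 orbb.
by rewrite (negbTE hu).
Qed.

Lemma final : exists alpha beta : F, forall t, inDom U t ->
    A t = alpha ^+ (#|F| %/ 2) + alpha /\ B t = alpha * t + beta.
Proof.
case: (pickP (inDom U)) => [t0 h0|none]; last by exists 0, 0 => t; rewrite none.
have msl : forall t, inDom U t -> t != t0 ->
    A t0 = sq ((B t - B t0) / (t - t0)) + (B t - B t0) / (t - t0).
  move=> t ht htt0; rewrite -(A_const _ _ ht h0).
  exact: (slope _ _ ht h0 (A_const _ _ ht h0) htt0).
have Bsl : forall t, t != t0 -> B t = (B t - B t0) / (t - t0) * t + (B t0 - (B t - B t0) / (t - t0) * t0).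
  move=> t htt0; have : t - t0 != 0 by rewrite subr_eq0.
  by move=> h; field.
case: (pickP [pred t | inDom U t && (t != t0)]) => [t1 /andP[h1 ht10]|none1].
- pose al := (B t1 - B t0) / (t1 - t0).
  have hal := msl _ h1 ht10; rewrite -/al in hal.
  exists al, (B t0 - al * t0) => t ht; split.
    by rewrite (A_const _ _ ht h0) hal /sq addrC.
  case: (eqVneq t t0) => [->|htt0]; first by ring.
  have hm := msl _ ht htt0.
  case: (sol_cases al ((B t - B t0) / (t - t0))); first by rewrite -hal -hm.
    by move=> e; rewrite {1}(Bsl _ htt0) e.
  move=> e; exfalso.
  have htt1 : t != t1.
    apply/negP => /eqP et; rewrite et -/al in e.
    by have := oner_neq0 F; rewrite -[X in X != _](addKr al) -e addNr eqxx.
  have hm' := slope _ _ ht h1 (A_const _ _ ht h1) htt1.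
  rewrite (A_const _ _ ht h0) hal in hm'.
  have h10 : t1 - t0 != 0 by rewrite subr_eq0.
  have h20 : t - t0 != 0 by rewrite subr_eq0.
  have h21 : t - t1 != 0 by rewrite subr_eq0.
  have eA : B t - B t0 = (al + 1) * (t - t0) by rewrite -e; field.
  have eB : B t1 - B t0 = al * (t1 - t0) by rewrite /al; field.
  set m' := (B t - B t1) / (t - t1) in hm'.
  have eC : B t - B t1 = m' * (t - t1) by rewrite /m'; field.
  have eD : m' * (t - t1) = al * (t - t1) + (t - t0).
    rewrite -eC.
    have -> : B t - B t1 = (B t - B t0) - (B t1 - B t0) by ring.
    by rewrite eA eB; ring.
  case: (sol_cases al m' hm') => em; rewrite em in eD.
  + by move: eD => /eqP; rewrite -subr_eq0 opprD addrA subrr sub0r oppr_eq0 (negbTE h20).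
  + move: eD; rewrite mulrDl mul1r => /addrI /eqP.
    by move=> /eqP /addrI /eqP; rewrite eqr_opp (negbTE ht10).
- have [al hal] := gamma _ h0.
  exists al, (B t0 - al * t0) => t ht.
  have et : t = t0.
    by apply/eqP; apply/negPn/negP => hne; have := none1 t; rewrite /= ht hne.
  by rewrite et hal /sq; split; [rewrite addrC|ring].
Qed.

End Main.

Theorem lemma13 (F : finFieldType) (n : nat) (U : {pred {poly F}})
  (A B : F -> F) :
  #|F| = (2 ^ n)%N -> (2 < #|F|)%N ->
  deg_le2 U -> intersecting U ->
  (forall t, inDom U t -> forall b, b \in Bset U t ->
     fU U b (b + t) = A t * b + B t) ->
  (forall t, inDom U t -> trace2 n (A t) = 0) ->
  exists alpha beta : F, forall t, inDom U t ->
    A t = alpha ^+ (#|F| %/ 2) + alpha /\ B t = alpha * t + beta.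
Proof.
move=> hq hq2 _ hint hf htr.
exact: (@final F n U A B hq hq2 hint hf htr).
Qed.
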